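(* Let $Alg$ be a classical Cholesky decomposition algorithm for $n{\times}n$ matrices implemented on a machine with a constant number $d$ of memory levels of sizes $M_1\le\cdots\le M_d$, inverse bandwidths $\beta_1\le\cdots\le\beta_d$ and latencies $\alpha_1\le\cdots\le\alpha_d$. Then the bandwidth cost of $Alg$ is $$\Omega\!\left(\sum_{i=1}^{d-1}\beta_i\left(\frac{n^3}{\sqrt{M_i}}-M_i\right)\right)$$ and the latency cost of $Alg$ is $$\Omega\!\left(\sum_{i=1}^{d-1}\alpha_i\,\frac{n^3}{M_i^{3/2}}\right).$$
   Context: The Cholesky decomposition of a real symmetric positive definite matrix $A$ is $A = LL^T$ with $L$ lower triangular; its entries satisfy $L(i,i)=\sqrt{A(i,i)-\sum_{k=1}^{i-1}L(i,k)^2}$ and $L(i,j)=\frac{1}{L(j,j)}\big(A(i,j)-\sum_{k=1}^{j-1}L(i,k)L(j,k)\big)$ for $i>j$. A ''classical'' Cholesky algorithm performs exactly these arithmetic operations, possibly reordered using only associativity and commutativity of addition (no pivoting, no distributivity). Hierarchical memory model: a sequential machine with $d$ levels of memory, level $i$ of size $M_i$ words; moving a message of $w$ contiguous words between level $i$ and the next slower level costs $\alpha_i+\beta_i w$. The input matrix initially resides in the slowest level. Bandwidth cost here is the sum over levels of $\beta_i$ times the number of words moved across that level boundary, and latency cost the sum over levels of $\alpha_i$ times the number of messages moved across that boundary. *)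

(* Defs.v *)
From Stdlib Require Import Reals.
From HB Require Import structures.
From mathcomp Require Import all_boot.

Set Implicit Arguments.
Unset Strict Implicit.
Unset Printing Implicit Defensive.

(** * Values (words) that a classical Cholesky algorithm on an n x n matrix
    can hold in memory.  Indices are 0-based: i, j, k : 'I_n.
    - [Lval i j]   : the output entry L(i,j) (j <= i).
    - [Sval i j s] : a partial sum of the summands of
          A(i,j) - sum_{k<j} L(i,k) L(j,k)
      selected by [s]: [None] stands for the summand A(i,j) and [Some k]
      for the summand - L(i,k) L(j,k).  Since only associativity and
      commutativity of addition may be used, a partial sum is determined
      (as a value) by the set of summands it contains.  In particular
      [Sval i j [set None]] is the input entry A(i,j) and
      [Sval i j [set Some k]] is the product L(i,k) L(j,k). *)
Inductive val (n : nat) : Type :=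
| Lval of 'I_n & 'I_n
| Sval of 'I_n & 'I_n & {set option 'I_n}.

Definition val_enc n (v : val n) :
  ('I_n * 'I_n) + ('I_n * 'I_n * {set option 'I_n}) :=
  match v with Lval i j => inl (i, j) | Sval i j s => inr (i, j, s) end.
Definition val_dec n (x : ('I_n * 'I_n) + ('I_n * 'I_n * {set option 'I_n})) : val n :=
  match x with inl (i, j) => Lval i j | inr (i, j, s) => Sval i j s end.
Lemma val_encK n : cancel (@val_enc n) (@val_dec n).
Proof. by case. Qed.
HB.instance Definition _ n := Finite.copy (val n) (can_type (@val_encK n)).

Definition summands n (j : 'I_n) : {set option 'I_n} :=
  None |: [set Some k | k : 'I_n & (k < j)%N].

(** Memory levels are numbered 0 (fastest) to d-1
    (slowest); "boundary l" is between level l and level l+1.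
    - [Fetch l w]  : one message copying the words [w] from level l+1 to level l;
    - [Store l w] : one message copying the words [w] from level l to level l+1;
    - [Discard l w] : free the words [w] of level l (no cost);
    - arithmetic happens in the fastest level 0:
      [Mul i j k]   : compute L(i,k) * L(j,k)  (k < j <= i);
      [Add i j s1 s2] : add two disjoint partial sums of entry (i,j);
      [Fin i j]     : from the complete sum compute L(i,j), by a square root
                      if i = j, by division by L(j,j) if i > j. *)
Inductive event (n : nat) : Type :=
| Fetch of nat & {set val n}
| Store of nat & {set val n}
| Discard of nat & {set val n}
| Mul of 'I_n & 'I_n & 'I_n
| Add of 'I_n & 'I_n & {set option 'I_n} & {set option 'I_n}
| Fin of 'I_n & 'I_n.

Definition mstate n := nat -> {set val n}.

Definition upd n (s : mstate n) (l : nat) (X : {set val n}) : mstate n :=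
  fun l' => if l' == l then X else s l'.

Definition step n (d : nat) (s : mstate n) (e : event n) : option (mstate n) :=
  match e with
  | Fetch l w =>
      if (l.+1 < d) && (w \subset s l.+1) then Some (upd s l (s l :|: w)) else None
  | Store l w =>
      if (l.+1 < d) && (w \subset s l) then Some (upd s l.+1 (s l.+1 :|: w)) else None
  | Discard l w =>
      if l < d then Some (upd s l (s l :\: w)) else None
  | Mul i j k =>
      if [&& k < j, j <= i, Lval i k \in s 0 & Lval j k \in s 0]
      then Some (upd s 0 (Sval i j [set Some k] |: s 0)) else None
  | Add i j s1 s2 =>
      if [&& Sval i j s1 \in s 0, Sval i j s2 \in s 0 & [disjoint s1 & s2]]
      then Some (upd s 0 (Sval i j (s1 :|: s2) |: s 0)) else None
  | Fin i j =>
      if [&& j <= i, Sval i j (summands j) \in s 0 & (i == j) || (Lval j j \in s 0)]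
      then Some (upd s 0 (Lval i j |: s 0)) else None
  end.

Definition fits n (d : nat) (M : nat -> nat) (s : mstate n) : bool :=
  [forall l : 'I_d, #|s l| <= M l].

Fixpoint exec n (d : nat) (M : nat -> nat) (s : mstate n) (tr : seq (event n)) : bool :=
  match tr with
  | [::] => true
  | e :: tr' =>
      match step d s e with
      | Some s' => fits d M s' && exec d M s' tr'
      | None => false
      end
  end.

(** Initially the (lower triangle of the symmetric) input matrix A is in the
    slowest level d-1, all other levels are empty. *)
Definition init n (d : nat) : mstate n :=
  fun l => if l == d.-1
           then [set Sval ij.1 ij.2 [set None] | ij : 'I_n * 'I_n & (ij.2 <= ij.1)%N]
           else set0.

Definition is_mul n (i j k : 'I_n) (e : event n) : bool :=
  if e is Mul i' j' k' then [&& i' == i, j' == j & k' == k] else false.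
Definition is_add n (i j : 'I_n) (e : event n) : bool :=
  if e is Add i' j' _ _ then (i' == i) && (j' == j) else false.
Definition is_fin n (i j : 'I_n) (e : event n) : bool :=
  if e is Fin i' j' then (i' == i) && (j' == j) else false.

(** A classical Cholesky algorithm for n x n matrices on the machine
    (d levels of sizes M 0, ..., M (d-1)): a legal execution from the initial
    state that performs exactly the arithmetic operations of the Cholesky
    formulas (each multiplication and each sqrt/division once, and exactly j
    additions to form the sum of the j+1 summands of entry (i,j)), with the
    sums possibly reordered by associativity/commutativity. *)
Definition classical_cholesky n (d : nat) (M : nat -> nat) (tr : seq (event n)) : Prop :=
  [/\ fits d M (init n d), exec d M (init n d) tr,
      forall i j k : 'I_n, count (is_mul i j k) tr = ((k < j) && (j <= i) : nat),
      forall i j : 'I_n, count (is_add i j) tr = (if (j <= i)%N then nat_of_ord j else 0%N)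
    & forall i j : 'I_n, count (is_fin i j) tr = ((j <= i)%N : nat)].

Definition msg_words n (l : nat) (e : event n) : nat :=
  match e with
  | Fetch l' w | Store l' w => if l' == l then #|w| else 0
  | _ => 0
  end.
Definition is_msg n (l : nat) (e : event n) : bool :=
  match e with
  | Fetch l' _ | Store l' _ => l' == l
  | _ => false
  end.

Definition sumR (m : nat) (f : nat -> R) : R :=
  foldr (fun l acc => Rplus (f l) acc) R0 (iota 0 m).

Definition bandwidth_cost n (d : nat) (beta : nat -> R) (tr : seq (event n)) : R :=
  sumR d.-1 (fun l => Rmult (beta l) (INR (sumn (map (msg_words l) tr)))).
Definition latency_cost n (d : nat) (alpha : nat -> R) (tr : seq (event n)) : R :=
  sumR d.-1 (fun l => Rmult (alpha l) (INR (count (is_msg l) tr))).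

(* Main.v *)
Require Import Defs.
From Stdlib Require Import Reals.
From Stdlib Require Import Arith Lra Psatz.
From mathcomp Require Import all_boot.
From mathcomp Require Import zify.

Set Implicit Arguments.
Unset Strict Implicit.

Unset Printing Implicit Defensive.

Definition stp n d (s : mstate n) (e : event n) : mstate n :=
  if step d s e is Some s' then s' else s.

Definition stf n d (s : mstate n) (tr : seq (event n)) (t : nat) : mstate n :=
  foldl (@stp n d) s (take t tr).

Definition ev n (tr : seq (event n)) t := nth (@Discard n 0 set0) tr t.

Lemma exec_stf n d M (tr : seq (event n)) (s : mstate n) :
  exec d M s tr -> forall t, t < size tr ->
  step d (stf d s tr t) (ev tr t) = Some (stf d s tr t.+1) /\
  fits d M (stf d s tr t.+1).
Proof.
elim: tr s => [//|e tr IH] s /=.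
case E: (step d s e) => [s'|//] /andP[Hf Hex] [|t] /= Ht.
  by rewrite /stf /ev /= take0 /= /stp E.
have := IH s' Hex t Ht.
by rewrite /stf /ev /= /stp E.
Qed.

Lemma stf0 n d (s : mstate n) tr : stf d s tr 0 = s.
Proof. by rewrite /stf take0. Qed.

Lemma exec_fits n d M (tr : seq (event n)) (s : mstate n) :
  fits d M s -> exec d M s tr -> forall t, t <= size tr -> fits d M (stf d s tr t).
Proof.
move=> H0 Hex [|t] Ht; first by rewrite stf0.
by have [] := exec_stf Hex Ht.
Qed.

Lemma count_ex n (p : pred (event n)) tr : 0 < count p tr ->
  exists2 t, t < size tr & p (ev tr t).
Proof. by rewrite -has_count => /(has_nthP (@Discard n 0 set0)). Qed.

Lemma count_uniq n (p : pred (event n)) tr t1 t2 : count p tr <= 1 ->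
  t1 < size tr -> t2 < size tr -> p (ev tr t1) -> p (ev tr t2) -> t1 = t2.
Proof.
move=> Hc.
wlog: t1 t2 / t1 <= t2.
  move=> W H1 H2 P1 P2; case: (leqP t1 t2) => h; first exact: W.
  by symmetry; apply: W => //; exact: ltnW.
rewrite leq_eqVlt => /orP[/eqP //|lt12] H1 H2 P1 P2; exfalso.
move: Hc; rewrite -(cat_take_drop t2 tr) count_cat.
have A : 0 < count p (take t2 tr).
  rewrite -has_count; apply/(has_nthP (@Discard n 0 set0)); exists t1.
    by rewrite size_take H2.
  by rewrite nth_take.
have B : 0 < count p (drop t2 tr).
  rewrite -has_count; apply/(has_nthP (@Discard n 0 set0)); exists 0.
    by rewrite size_drop subn_gt0.
  by rewrite nth_drop addn0.
by move: A B; case: (count p (take t2 tr)) => [|[|a]] //; case: (count p (drop t2 tr)).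
Qed.

Lemma in_upd n (s : mstate n) l X lv v : v \in upd s l X lv -> (lv = l /\ v \in X) \/ v \in s lv.
Proof. rewrite /upd; case: eqP => ?; by [left | right]. Qed.

Lemma back1 n d (s s' : mstate n) e (i j k : 'I_n) x lv :
  step d s e = Some s' -> ~~ is_mul i j k e -> Sval i j x \in s' lv -> Some k \in x ->
  exists x' lv', Sval i j x' \in s lv' /\ Some k \in x'.
Proof.
case: e => [l' w|l' w|l' w|i' j' k'|i' j' s1 s2|i' j'] /=.
- case: ifP => // /andP[_ Hw] [<-] _ /in_upd [[_ H]|H] Hk; last by exists x, lv.
  move: H.
  rewrite inE => /orP[H|H]; first by exists x, l'.
  by exists x, l'.+1; split=> //; apply: (subsetP Hw).
- case: ifP => // /andP[_ Hw] [<-] _ /in_upd [[_ H]|H] Hk; last by exists x, lv.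
  move: H.
  rewrite inE => /orP[H|H]; first by exists x, l'.+1.
  by exists x, l'; split=> //; apply: (subsetP Hw).
- case: ifP => // _ [<-] _ /in_upd [[_ H]|H] Hk; last by exists x, lv.
  move: H.
  by rewrite inE => /andP[_ H]; exists x, l'.
- case: ifP => // _ [<-] Hm /in_upd [[_ H]|H] Hk; last by exists x, lv.
  move: H.
  rewrite in_setU1 => /orP[/eqP E|H]; last by exists x, 0.
  case: E => e1 e2 e3; subst.
  move: Hk Hm; rewrite inE => /eqP [->].
  by rewrite /= !eqxx.
- case: ifP => // /and3P[H1 H2 _] [<-] _ /in_upd [[_ H]|H] Hk; last by exists x, lv.
  move: H.
  rewrite in_setU1 => /orP[/eqP E|H]; last by exists x, 0.
  case: E => e1 e2 e3; subst; move: Hk; rewrite inE => /orP[Hk|Hk]; first by exists s1, 0.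
  by exists s2, 0.
- case: ifP => // _ [<-] _ /in_upd [[_ H]|H] Hk; last by exists x, lv.
  move: H.
  by rewrite in_setU1 => /orP[/eqP //|H]; exists x, 0.
Qed.

Definition fw n l (e : event n) : {set Defs.val n} :=
  if e is Fetch l' w then (if l' == l then w else set0) else set0.
Definition sw n l (e : event n) : {set Defs.val n} :=
  if e is Store l' w then (if l' == l then w else set0) else set0.
Definition pairv n (v : Defs.val n) : 'I_n * 'I_n :=
  match v with Lval i j => (i, j) | Sval i j _ => (i, j) end.
Definition goodv n (v : Defs.val n) : bool :=
  match v with Lval _ _ => true | Sval _ _ x => None \in x end.
Definition Fast n l (s : mstate n) := \bigcup_(t < l.+1) s t.
Definition Slow n d l (s : mstate n) := \bigcup_(t < d | l < t) s t.

Lemma inFast n l (s : mstate n) v : v \in Fast l s <-> exists2 t, t <= l & v \in s t.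
Proof.
split; first by case/bigcupP => t _ H; exists t => //; rewrite -ltnS.
by case=> t Ht H; apply/bigcupP; exists (Ordinal (Ht : t < l.+1)).
Qed.

Lemma inSlow n d l (s : mstate n) v : v \in Slow d l s <-> exists t, [/\ t < d, l < t & v \in s t].
Proof.
split; first by case/bigcupP => t Ht H; exists t.
by case=> t [Ht Hl H]; apply/bigcupP; exists (Ordinal Ht).
Qed.

Lemma I1step n d l (s s' : mstate n) e (Gs : {set 'I_n * 'I_n}) :
  step d s e = Some s' ->
  (forall v, v \in Fast l s -> goodv v -> pairv v \in Gs) ->
  forall v, v \in Fast l s' -> goodv v -> pairv v \in Gs :|: (@pairv n) @: fw l e.
Proof.
move=> Hs HG v /inFast [t Ht Hv] Hg.
have old : v \in s t -> pairv v \in Gs :|: (@pairv n) @: fw l e.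
  by move=> H; rewrite inE HG //; apply/inFast; exists t.
have oldF : forall t', t' <= l -> v \in s t' -> pairv v \in Gs :|: (@pairv n) @: fw l e.
  by move=> t' Ht' H; rewrite inE HG //; apply/inFast; exists t'.
move: Hs; case: e old oldF => [l' w|l' w|l' w|i' j' k'|i' j' s1 s2|i' j'] old oldF /=.
- case: ifP => // /andP[_ Hw] [E]; subst s'.
  case/in_upd: Hv => [[Et H]|]; last exact: old.
  subst t; move: H; rewrite inE => /orP[H|H]; first exact: (oldF l').
  move: Ht; rewrite leq_eqVlt => /orP[/eqP El|Hl].
    by subst; rewrite inE; apply/orP; right; rewrite eqxx; apply: imset_f.
  by apply: (oldF l'.+1) => //; apply: (subsetP Hw).
- case: ifP => // /andP[_ Hw] [E]; subst s'.
  case/in_upd: Hv => [[Et H]|]; last exact: old.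
  subst t; move: H; rewrite inE => /orP[H|H]; first exact: (oldF l'.+1).
  by apply: (oldF l'); [exact: ltnW | apply: (subsetP Hw)].
- case: ifP => // _ [E]; subst s'.
  case/in_upd: Hv => [[Et H]|]; last exact: old.
  by subst t; move: H; rewrite inE => /andP[_ H]; apply: (oldF l').
- case: ifP => // _ [E]; subst s'.
  case/in_upd: Hv => [[Et H]|]; last exact: old.
  move: H; rewrite in_setU1 => /orP[/eqP Ev|H]; last exact: (oldF 0).
  by subst v; move: Hg; rewrite /= inE.
- case: ifP => // /and3P[H1 H2 _] [E]; subst s'.
  case/in_upd: Hv => [[Et H]|]; last exact: old.
  move: H; rewrite in_setU1 => /orP[/eqP Ev|H]; last exact: (oldF 0).
  subst v; move: Hg; rewrite /= inE => /orP[Hn|Hn].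
    by rewrite inE (HG (Sval i' j' s1)) //; apply/inFast; exists 0.
  by rewrite inE (HG (Sval i' j' s2)) //; apply/inFast; exists 0.
- case: ifP => // /and3P[_ H2 _] [E]; subst s'.
  case/in_upd: Hv => [[Et H]|]; last exact: old.
  move: H; rewrite in_setU1 => /orP[/eqP Ev|H]; last exact: (oldF 0).
  subst v; rewrite inE (HG (Sval i' j' (summands j'))) //; first by apply/inFast; exists 0.
  by rewrite /= /summands in_setU1 eqxx.
Qed.

Lemma I2step n d l (s s' : mstate n) e v :
  step d s e = Some s' -> v \in Slow d l s' -> v \in Slow d l s \/ v \in sw l e.
Proof.
move=> Hs /inSlow [t [Htd Hlt Hv]].
have old : forall t', t' < d -> l < t' -> v \in s t' -> v \in Slow d l s \/ v \in sw l e.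
  by move=> t' a b c; left; apply/inSlow; exists t'.
move: Hs; case: e old => [l' w|l' w|l' w|i' j' k'|i' j' s1 s2|i' j'] old /=.
- case: ifP => // /andP[Hd Hw] [E]; subst s'.
  case/in_upd: Hv => [[Et H]|]; last exact: old.
  subst t; move: H; rewrite inE => /orP[H|H]; first exact: (old l').
  by apply: (old l'.+1) => //; [exact: ltnW | apply: (subsetP Hw)].
- case: ifP => // /andP[Hd Hw] [E]; subst s'.
  case/in_upd: Hv => [[Et H]|]; last exact: old.
  subst t; move: H; rewrite inE => /orP[H|H]; first exact: (old l'.+1).
  move: Hlt; rewrite ltnS leq_eqVlt => /orP[/eqP El|Hl].
    by subst; right; rewrite /= eqxx.
  by apply: (old l') => //; [exact: ltnW | apply: (subsetP Hw)].
- case: ifP => // Hd [E]; subst s'.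
  case/in_upd: Hv => [[Et H]|]; last exact: old.
  by subst t; move: H; rewrite inE => /andP[_ H]; apply: (old l').
- case: ifP => // _ [E]; subst s'.
  by case/in_upd: Hv => [[Et H]|]; [subst t | exact: old].
- case: ifP => // _ [E]; subst s'.
  by case/in_upd: Hv => [[Et H]|]; [subst t | exact: old].
- case: ifP => // _ [E]; subst s'.
  by case/in_upd: Hv => [[Et H]|]; [subst t | exact: old].
Qed.

Lemma I0step n d (s s' : mstate n) e : 0 < d ->
  step d s e = Some s' -> (forall lv, d <= lv -> s lv = set0) ->
  forall lv, d <= lv -> s' lv = set0.
Proof.
move=> d0 Hs H lv Hlv.
have U : forall L X, L < d -> upd s L X lv = set0.
  move=> L X HL; rewrite /upd; case: eqP => [E|_]; last exact: H.
  by move: HL; rewrite -E ltnNge Hlv.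
move: Hs; case: e => [l' w|l' w|l' w|i' j' k'|i' j' s1 s2|i' j'] /=.
- by case: ifP => // /andP[Hd _] [<-]; apply: U; exact: ltnW.
- by case: ifP => // /andP[Hd _] [<-]; apply: U.
- by case: ifP => // Hd [<-]; apply: U.
- by case: ifP => // _ [<-]; apply: U.
- by case: ifP => // _ [<-]; apply: U.
- by case: ifP => // _ [<-]; apply: U.
Qed.

Definition st n d (tr : seq (event n)) t := stf d (init n d) tr t.

Definition InS n l (tr : seq (event n)) a b := \bigcup_(a <= u < b) fw l (ev tr u).
Definition OutS n l (tr : seq (event n)) a b := \bigcup_(a <= u < b) sw l (ev tr u).

Lemma bigcup_nat_recr n (F : nat -> {set Defs.val n}) a b : a <= b ->
  \bigcup_(a <= u < b.+1) F u = \bigcup_(a <= u < b) F u :|: F b.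
Proof. by move=> h; rewrite big_nat_recr. Qed.

Lemma bigcup_nat0 n (F : nat -> {set Defs.val n}) a : \bigcup_(a <= u < a) F u = set0.
Proof. by rewrite big_geq. Qed.

Lemma st_step n d M (tr : seq (event n)) t : exec d M (init n d) tr -> t < size tr ->
  step d (st d tr t) (ev tr t) = Some (st d tr t.+1).
Proof. by move=> H Ht; have [] := exec_stf H Ht. Qed.

Lemma T0 n d M (tr : seq (event n)) : 0 < d -> exec d M (init n d) tr ->
  forall t, t <= size tr -> forall lv, d <= lv -> st d tr t lv = set0.
Proof.
move=> d0 Hex; elim=> [|t IH] Ht lv Hlv.
  rewrite /st stf0 /init; case: eqP => // E; rewrite E in Hlv.
  by move: Hlv d0; case: (d) => //= d'; rewrite ltnn.
apply: (I0step d0 (st_step Hex Ht)) => //; apply: IH; exact: ltnW.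
Qed.

Lemma L2 n d M (tr : seq (event n)) (i j k : 'I_n) : exec d M (init n d) tr ->
  forall t1 t2 x lv, t1 <= t2 -> t2 <= size tr ->
  Sval i j x \in st d tr t2 lv -> Some k \in x ->
  (forall t, t1 <= t < t2 -> ~~ is_mul i j k (ev tr t)) ->
  exists x' lv', Sval i j x' \in st d tr t1 lv' /\ Some k \in x'.
Proof.
move=> Hex t1; elim=> [|t2 IH] x lv H12 H2 Hv Hk Hn.
  by move: H12; rewrite leqn0 => /eqP ->; exists x, lv.
move: H12; rewrite leq_eqVlt => /orP[/eqP ->|H12]; first by exists x, lv.
have Hnt : ~~ is_mul i j k (ev tr t2) by apply: Hn; rewrite -ltnS H12 ltnSn.
have [x' [lv' [Hv' Hk']]] := back1 (st_step Hex H2) Hnt Hv Hk.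
apply: (IH x' lv') => //.
- exact: ltnW.
- by move=> t /andP[a b]; apply: Hn; rewrite a ltnW.
Qed.

Lemma L1 n d M (tr : seq (event n)) (i j k : 'I_n) : exec d M (init n d) tr ->
  forall t x lv, t <= size tr -> Sval i j x \in st d tr t lv -> Some k \in x ->
  exists2 t', t' < t & is_mul i j k (ev tr t').
Proof.
move=> Hex t x lv Ht Hv Hk.
case: (boolP [exists t' : 'I_t, is_mul i j k (ev tr t')]).
  by case/existsP => t' H; exists t'.
move/existsPn => Hn.
have [x' [lv' [Hv' Hk']]] := L2 Hex (leq0n t) Ht Hv Hk
   (fun t' (h : 0 <= t' < t) => Hn (Ordinal (proj2 (andP h)))).
move: Hv'; rewrite /st stf0 /init; case: eqP => _; last by rewrite inE.
case/imsetP => ij _ [_ _ E]; move: Hk'; rewrite E inE.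
by [].
Qed.

Lemma I1tr n d M l (tr : seq (event n)) a : exec d M (init n d) tr ->
  forall t, a <= t -> t <= size tr ->
  forall v, v \in Fast l (st d tr t) -> goodv v ->
  pairv v \in (@pairv n) @: (Fast l (st d tr a) :|: InS l tr a t).
Proof.
move=> Hex; elim=> [|t IH] Ha Ht v Hv Hg.
  by move: Ha; rewrite leqn0 => /eqP E; subst a; apply: imset_f; rewrite inE Hv.
move: Ha; rewrite leq_eqVlt => /orP[/eqP E|Ha].
  by subst a; apply: imset_f; rewrite inE Hv.
have := I1step (st_step Hex Ht) (IH Ha (ltnW Ht)) Hv Hg.
rewrite inE => /orP[H|/imsetP [w Hw ->]].
  move: H; apply/subsetP; apply: imsetS; apply: setUS.
  by rewrite /InS bigcup_nat_recr // subsetUl.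
apply: imset_f; rewrite /InS bigcup_nat_recr //.
by rewrite !inE Hw !orbT.
Qed.

Lemma I2tr n d M l (tr : seq (event n)) a : exec d M (init n d) tr ->
  forall t, a <= t -> t <= size tr ->
  forall v, v \in Slow d l (st d tr t) -> v \in Slow d l (st d tr a) \/ v \in OutS l tr a t.
Proof.
move=> Hex; elim=> [|t IH] Ha Ht v Hv.
  by move: Ha; rewrite leqn0 => /eqP E; subst a; left.
move: Ha; rewrite leq_eqVlt => /orP[/eqP E|Ha].
  by subst a; left.
case: (I2step (st_step Hex Ht) Hv) => [H|H].
  case: (IH Ha (ltnW Ht) v H) => [H'|H']; first by left.
  by right; rewrite /OutS bigcup_nat_recr // inE H'.
by right; rewrite /OutS bigcup_nat_recr // inE H orbT.
Qed.

Definition Tset n (tr : seq (event n)) a b : {set 'I_n * ('I_n * 'I_n)} :=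
  [set x | [exists u : 'I_(size tr), (a <= u < b) && is_mul x.1 x.2.1 x.2.2 (ev tr u)]].

Definition Gset n l d (tr : seq (event n)) a b :=
  (@pairv n) @: (Fast l (st d tr a) :|: InS l tr a b).

Definition Aset n l d (tr : seq (event n)) a b :=
  Gset l d tr a b :|: (@pairv n) @: Fast l (st d tr b) :|: (@pairv n) @: OutS l tr a b.

Lemma is_mulE n (i j k : 'I_n) e : is_mul i j k e -> e = Mul i j k.
Proof. by case: e => // i' j' k' /and3P[/eqP-> /eqP-> /eqP->]. Qed.
Lemma is_finE n (i j : 'I_n) e : is_fin i j e -> e = Fin i j.
Proof. by case: e => // i' j' /andP[/eqP-> /eqP->]. Qed.

Lemma step_mul n d (s s' : mstate n) i j k : step d s (Mul i j k) = Some s' ->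
  [&& k < j, j <= i, Lval i k \in s 0 & Lval j k \in s 0].
Proof. by rewrite /=; case: ifP. Qed.
Lemma step_fin n d (s s' : mstate n) i j : step d s (Fin i j) = Some s' ->
  (j <= i) && (Sval i j (summands j) \in s 0).
Proof. by rewrite /=; case: ifP => // /and3P[-> -> _]. Qed.

Lemma in_bigcup_nat n (F : nat -> {set Defs.val n}) a b v :
  v \in \bigcup_(a <= u < b) F u <-> exists u, [/\ a <= u, u < b & v \in F u].
Proof.
elim: b => [|b IH]; first by rewrite big_geq //; split => [|[u [_ //]]]; rewrite inE.
case: (leqP a b) => [ab|ba].
  rewrite big_nat_recr // inE; split.
    case/orP => [H|H]; last by exists b.
    have [u [h1 h2 h3]] := proj1 IH H; exists u; split => //; exact: ltnW.
  case=> u [h1 h2 h3]; move: h2; rewrite ltnS leq_eqVlt => /orP[/eqP E|h2].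
    by subst; rewrite h3 orbT.
  by apply/orP; left; apply: (proj2 IH); exists u.
rewrite big_geq // inE; split => [//|[u [h1 h2 _]]].
by move: (leq_ltn_trans h1 h2); rewrite ltnS leqNgt ba.
Qed.

Lemma InS_mono n l (tr : seq (event n)) a u b : u <= b -> InS l tr a u \subset InS l tr a b.
Proof.
move=> h; apply/subsetP => v /in_bigcup_nat [w [h1 h2 h3]]; apply/in_bigcup_nat.
by exists w; split => //; apply: leq_trans h.
Qed.

Lemma Gset_mono n l d (tr : seq (event n)) a u b : u <= b -> Gset l d tr a u \subset Gset l d tr a b.
Proof. by move=> h; apply: imsetS; apply: setUS; apply: InS_mono. Qed.

Lemma G_of_fast n d M l (tr : seq (event n)) a t b v : exec d M (init n d) tr ->
  a <= t -> t <= b -> b <= size tr -> v \in st d tr t 0 -> goodv v -> pairv v \in Gset l d tr a b.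
Proof.
move=> Hex h1 h2 h3 Hv Hg; apply: (subsetP (Gset_mono l d tr a h2)).
apply: (I1tr Hex h1 (leq_trans h2 h3)) => //; by apply/inFast; exists 0.
Qed.

Lemma seg_mem n d M l (tr : seq (event n)) a b i j k :
  0 < d -> l.+1 < d -> classical_cholesky d M tr -> a <= b -> b <= size tr ->
  (i, (j, k)) \in Tset tr a b ->
  [/\ (i, k) \in Gset l d tr a b, (j, k) \in Gset l d tr a b & (i, j) \in Aset l d tr a b].
Proof.
move=> d0 ld [_ Hex Cm _ Cf] hab hb.
rewrite inE => /existsP [[u Hu] /= /andP [/andP[au ub] Hm]].
have Hs := st_step Hex Hu; rewrite (is_mulE Hm) in Hs.
have /and4P [kj ji Lik Ljk] := step_mul Hs.
have hub : u <= b by exact: ltnW.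
have Hcm : count (is_mul i j k) tr <= 1 by rewrite Cm kj ji.
split; first exact: (G_of_fast l Hex au hub hb Lik).
  exact: (G_of_fast l Hex au hub hb Ljk).
have : 0 < count (is_fin i j) tr by rewrite Cf ji.
case/count_ex => t2 Ht2 Hf.
have Hs2 := st_step Hex Ht2; rewrite (is_finE Hf) in Hs2.
have /andP [_ Hsum] := step_fin Hs2.
have Hk : Some k \in summands j by rewrite /summands in_setU1 /=; apply/imsetP; exists k; rewrite ?inE.
case: (ltnP t2 a) => [t2a|at2].
  have [t' t't2 Hm'] := L1 Hex (ltnW Ht2) Hsum Hk.
  have E := count_uniq Hcm (ltn_trans t't2 Ht2) Hu Hm' Hm.
  by move: au; rewrite -E leqNgt (ltn_trans t't2 t2a).
case: (ltnP t2 b) => [t2b|bt2].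
  rewrite !inE; apply/orP; left; apply/orP; left.
  by apply: (G_of_fast l Hex at2 (ltnW t2b) hb Hsum); rewrite /= /summands in_setU1 eqxx.
have Hno : forall t, b <= t < t2 -> ~~ is_mul i j k (ev tr t).
  move=> t /andP[bt tt2]; apply/negP => Hm'.
  have E := count_uniq Hcm (ltn_trans tt2 Ht2) Hu Hm' Hm.
  by move: ub; rewrite -E ltnNge bt.
have [x' [lv' [Hv' Hk']]] := L2 Hex bt2 (ltnW Ht2) Hsum Hk Hno.
case: (leqP lv' l) => [Hl|Hl].
  rewrite !inE; apply/orP; left; apply/orP; right.
  by apply/imsetP; exists (Sval i j x') => //; apply/inFast; exists lv'.
case: (ltnP lv' d) => [Hd|Hd]; last by move: Hv'; rewrite (T0 d0 Hex hb Hd) inE.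
have HS : Sval i j x' \in Slow d l (st d tr b) by apply/inSlow; exists lv'.
case: (I2tr Hex hab hb HS) => [/inSlow [lv'' [_ _ H]]|H].
  have [t' t'a Hm'] := L1 Hex (leq_trans hab hb) H Hk'.
  have E := count_uniq Hcm (ltn_trans t'a (leq_ltn_trans au Hu)) Hu Hm' Hm.
  by move: au; rewrite -E leqNgt t'a.
by rewrite !inE; apply/orP; right; apply/imsetP; exists (Sval i j x').
Qed.

Lemma card_split (I J : finType) (T : {set I * J}) :
  #|T| = \sum_(i : I) #|[set j | (i, j) \in T]|.
Proof.
rewrite (eq_bigr (fun i => \sum_(j : J) (if (i, j) \in T then 1 else 0))).
  rewrite pair_bigA /= -sum1_card big_mkcond /=.
  by apply: eq_bigr => [[i j]].
by move=> i _; rewrite -sum1_card big_mkcond /=; apply: eq_bigr => j _; rewrite inE.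
Qed.

Lemma LW (I : finType) (T : {set I * (I * I)}) (A B C : {set I * I}) h :
  (forall i j k, (i, (j, k)) \in T -> [/\ (i, j) \in A, (i, k) \in B & (j, k) \in C]) ->
  #|T| * h <= #|A| * h * h + #|B| * #|C|.
Proof.
move=> H.
rewrite (card_split T) (card_split A) (card_split B) !big_distrl /= -big_split /=.
apply: leq_sum => i _.
set Ti := [set jk | (i, jk) \in T].
set Ai := [set j | (i, j) \in A].
set Bi := [set k | (i, k) \in B].
have h1 : #|Ti| <= #|Ai| * #|Bi|.
  rewrite -cardsX; apply: subset_leq_card; apply/subsetP => [[j k]].
  by rewrite !inE => /H [a b _]; rewrite a b.
have h2 : #|Ti| <= #|C|.
  apply: subset_leq_card; apply/subsetP => [[j k]].
  by rewrite !inE => /H [_ _ c].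
case: (ltnP #|Bi| h) => hb.
  apply: leq_trans (leq_addr _ _).
  apply: leq_trans (leq_mul h1 (leqnn h)) _.
  exact: leq_mul (leq_mul (leqnn _) (ltnW hb)) (leqnn h).
apply: leq_trans (leq_addl _ _).
by rewrite mulnC; apply: leq_mul.
Qed.

Lemma card_bigU (T : finType) (I : Type) (r : seq I) (P : pred I) (F : I -> {set T}) :
  #|\big[@setU T/set0]_(i <- r | P i) F i| <= \sum_(i <- r | P i) #|F i|.
Proof.
elim: r => [|x r IH]; first by rewrite !big_nil cards0.
rewrite !big_cons; case: (P x) => //.
apply: leq_trans (leq_card_setU _ _) _; exact: leq_add.
Qed.

Lemma M_mono (M : nat -> nat) d : (forall l, l.+1 < d -> M l <= M l.+1) ->
  forall t l, t <= l -> l < d -> M t <= M l.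
Proof.
move=> HM t; elim=> [|l IH]; first by rewrite leqn0 => /eqP ->.
rewrite leq_eqVlt => /orP[/eqP -> //|]; rewrite ltnS => htl hl.
apply: leq_trans (IH htl (ltnW hl)) (HM l hl).
Qed.

Lemma card_Fast n d (M : nat -> nat) l (s : mstate n) : l < d -> fits d M s ->
  (forall l, l.+1 < d -> M l <= M l.+1) -> #|Fast l s| <= d * M l.
Proof.
move=> ld /forallP Hf HM.
apply: leq_trans (card_bigU _ _ _) _.
apply: leq_trans (_ : \sum_(t < l.+1) M l <= _).
  apply: leq_sum => t _.
  have tl : t <= l by rewrite -ltnS ltn_ord.
  have td : t < d by exact: leq_ltn_trans tl ld.
  apply: leq_trans (Hf (Ordinal td)) _; exact: M_mono HM _ _ tl ld.
by rewrite sum_nat_const card_ord leq_mul2r ld orbT.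
Qed.

Definition words n l (tr : seq (event n)) a b := \sum_(a <= u < b) msg_words l (ev tr u).

Lemma card_InOut n l (tr : seq (event n)) a b :
  #|InS l tr a b| + #|OutS l tr a b| <= words l tr a b.
Proof.
apply: leq_trans (leq_add (card_bigU _ _ _) (card_bigU _ _ _)) _.
rewrite -big_split /=; apply: leq_sum => u _.
by case: (ev tr u) => [l' w|l' w|l' w|???|????|??] /=; rewrite ?cards0 //; case: (l' == l); rewrite ?cards0 ?addn0.
Qed.

Lemma msg_le n d M l (tr : seq (event n)) u : exec d M (init n d) tr -> fits d M (init n d) ->
  l < d -> u < size tr -> msg_words l (ev tr u) <= M l.
Proof.
move=> Hex Hf0 ld Hu.
have [Hs Hf1] := exec_stf Hex Hu.
have /forallP Hf := exec_fits Hf0 Hex (ltnW Hu).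
move/forallP: Hf1 => Hf1.
move: Hs.
case: (ev tr u) => //= l' w; case: eqP => [E|]; try by case: ifP.
- subst l'; case: ifP => // /andP[_ Hw] [E].
  have := Hf1 (Ordinal ld); rewrite /= -E /upd eqxx => h.
  by apply: leq_trans h; apply: subset_leq_card; apply: subsetUr.
- subst l'; case: ifP => // /andP[_ Hw] [E].
  apply: leq_trans (Hf (Ordinal ld)); exact: subset_leq_card.
Qed.

Lemma seg_bound n d M l (tr : seq (event n)) a b h :
  0 < d -> l.+1 < d -> classical_cholesky d M tr ->
  (forall l, l.+1 < d -> M l <= M l.+1) ->
  a <= b -> b <= size tr -> words l tr a b <= 2 * (d * M l) ->
  #|Tset tr a b| * h <= 4 * (d * M l) * h * h + 4 * (d * M l) * (4 * (d * M l)).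
Proof.
move=> d0 ld CC HM hab hb hw.
have CC' := CC; case: CC' => [Hf0 Hex _ _ _].
set K := d * M l.
have ld' : l < d by exact: ltnW.
have FA : #|Fast l (st d tr a)| <= K.
  by apply: card_Fast => //; apply: exec_fits => //; exact: leq_trans hab hb.
have FB : #|Fast l (st d tr b)| <= K by apply: card_Fast => //; exact: exec_fits.
have IO := card_InOut l tr a b.
have G1 : #|Gset l d tr a b| <= K + #|InS l tr a b|.
  apply: leq_trans (leq_imset_card _ _) _.
  apply: leq_trans (leq_card_setU _ _) _; exact: leq_add.
have A1 : #|Aset l d tr a b| <= 4 * K.
  apply: leq_trans (leq_card_setU _ _) _.
  apply: leq_trans (leq_add (leq_card_setU _ _) (leq_imset_card _ _)) _.
  apply: leq_trans (leq_add (leq_add G1 (leq_imset_card _ _)) (leqnn _)) _.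
  clear -IO hw FB; move: IO hw FB; rewrite /K; set W := words _ _ _ _; set I1 := #|InS _ _ _ _|; set O1 := #|OutS _ _ _ _|; set F1 := #|Fast _ _|; set K1 := d * M l; lia.
have G2 : #|Gset l d tr a b| <= 4 * K.
  clear -IO hw G1; move: IO hw G1; rewrite /K; set W := words _ _ _ _; set I1 := #|InS _ _ _ _|; set O1 := #|OutS _ _ _ _|; set F1 := #|Gset _ _ _ _ _|; set K1 := d * M l; lia.
apply: leq_trans (@LW _ _ 
 (Aset l d tr a b) (Gset l d tr a b) (Gset l d tr a b) h _) _.
  move=> i j k Hx; have [p q r] := seg_mem d0 ld CC hab hb Hx; by split.
apply: leq_add; first by rewrite !leq_mul2r A1 !orbT.
exact: leq_mul.
Qed.

Lemma words_recr n l (tr : seq (event n)) a b : a <= b ->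
  words l tr a b.+1 = words l tr a b + msg_words l (ev tr b).
Proof. by move=> h; rewrite /words big_nat_recr. Qed.

Lemma words0 n l (tr : seq (event n)) a : words l tr a a = 0.
Proof. by rewrite /words big_geq. Qed.

Lemma words_cat n l (tr : seq (event n)) a b c : a <= b -> b <= c ->
  words l tr a c = words l tr a b + words l tr b c.
Proof. by move=> h1 h2; rewrite /words (big_cat_nat h1 h2). Qed.

Lemma exists_cut n l (tr : seq (event n)) a K : 0 < K ->
  forall b0, a <= b0 -> K <= words l tr a b0 ->
  exists b, [/\ a < b, b <= b0, K <= words l tr a b & words l tr a b.-1 < K].
Proof.
move=> K0; elim=> [|b0 IH] ab0 Hw.
  by move: ab0 Hw; rewrite leqn0 => /eqP ->; rewrite words0 leqNgt K0.
move: ab0; rewrite leq_eqVlt => /orP[/eqP E|ab0].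
  by move: Hw; rewrite E words0 leqNgt K0.
case: (ltnP (words l tr a b0) K) => h.
  by exists b0.+1; split.
have [b [h1 h2 h3 h4]] := IH ab0 h.
by exists b; split => //; exact: leqW.
Qed.

Lemma Tset_split n (tr : seq (event n)) a b c :
  #|Tset tr a c| <= #|Tset tr a b| + #|Tset tr b c|.
Proof.
apply: leq_trans (leq_card_setU _ _); apply: subset_leq_card.
apply/subsetP => x; rewrite !inE => /existsP [u /andP[/andP[h1 h2] h3]].
case: (ltnP u b) => hb.
  by apply/orP; left; apply/existsP; exists u; rewrite h1 hb h3.
by apply/orP; right; apply/existsP; exists u; rewrite hb h2 h3.
Qed.

Lemma rec_bound n d M l (tr : seq (event n)) h :
  0 < d -> l.+1 < d -> classical_cholesky d M tr -> 0 < M l ->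
  (forall l, l.+1 < d -> M l <= M l.+1) ->
  forall a, a <= size tr ->
  #|Tset tr a (size tr)| * h * (d * M l) <=
  (words l tr a (size tr) + d * M l) *
    (4 * (d * M l) * h * h + 4 * (d * M l) * (4 * (d * M l))).
Proof.
move=> d0 ld CC M0 HM.
have CC' := CC; case: CC' => [Hf0 Hex _ _ _].
set K := d * M l.
set Bd := 4 * K * h * h + 4 * K * (4 * K).
have K0 : 0 < K by rewrite /K muln_gt0 d0 M0.
have MK : M l <= K by rewrite /K leq_pmull.
have [k Hk] : exists k, size tr <= k by exists (size tr).
suff : forall a, size tr - a <= k -> a <= size tr ->
  #|Tset tr a (size tr)| * h * K <= (words l tr a (size tr) + K) * Bd.
  by move=> H a ha; apply: H => //; apply: leq_trans (leq_subr _ _) Hk.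
elim: k {Hk} => [|k IH] a Hka ha.
- have -> : a = size tr by move: Hka ha; lia.
  have := seg_bound h d0 ld CC HM (leqnn _) (leqnn _).
  rewrite words0 => H; have {H} H := H (leq0n _).
  by rewrite -/K -/Bd in H; rewrite add0n mulnC leq_mul2l H orbT.
case: (ltnP (words l tr a (size tr)) K) => hw.
  have := seg_bound h d0 ld CC HM ha (leqnn _).
  rewrite -/K -/Bd => H; have {H} H := H (leq_trans (ltnW hw) (leq_pmull _ (isT : 0 < 2))).
  apply: leq_trans (_ : Bd * K <= _); first by rewrite leq_mul2r H orbT.
  by rewrite mulnC leq_mul2r leq_addl orbT.
have [b [h1 h2 h3 h4]] := @exists_cut n l tr a K K0 (size tr) ha hw.
have hb1 : a <= b.-1 by rewrite -ltnS prednK // (leq_ltn_trans _ h1).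
have Hb : b.-1 < size tr by rewrite prednK ?(leq_ltn_trans _ h1).
have hwab : words l tr a b <= 2 * K.
  have := words_recr l tr hb1; rewrite prednK ?(leq_ltn_trans _ h1) // => ->.
  have := msg_le Hex Hf0 (ltnW ld) Hb; move: h4 MK; lia.
have S1 := seg_bound h d0 ld CC HM (ltnW h1) h2 hwab; rewrite -/K -/Bd in S1.
have S2 : #|Tset tr b (size tr)| * h * K <= (words l tr b (size tr) + K) * Bd.
  apply: IH => //; move: Hka h1; lia.
have E := words_cat l tr (ltnW h1) h2.
apply: leq_trans (_ : (#|Tset tr a b| + #|Tset tr b (size tr)|) * h * K <= _).
  by rewrite leq_mul2r leq_mul2r Tset_split !orbT.
have X1 : #|Tset tr a b| * h * K <= words l tr a b * Bd.
  apply: leq_trans (_ : Bd * K <= _); first by rewrite leq_mul2r S1 orbT.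
  by rewrite mulnC leq_mul2r h3 orbT.
rewrite !mulnDl.
apply: leq_trans (leq_add X1 S2) _.
by rewrite E mulnDl mulnDl addnA.
Qed.

Lemma sumn_words n l (tr : seq (event n)) :
  sumn (map (msg_words l) tr) = words l tr 0 (size tr).
Proof. by rewrite sumnE big_map (big_nth (@Discard n 0 set0)). Qed.

Lemma count_sumidx n (p : pred (event n)) (tr : seq (event n)) :
  count p tr = \sum_(0 <= u < size tr) p (ev tr u).
Proof.
by rewrite -sumn_count sumnE big_map (big_nth (@Discard n 0 set0)).
Qed.

Lemma words_count n d M l (tr : seq (event n)) : exec d M (init n d) tr -> fits d M (init n d) ->
  l < d -> words l tr 0 (size tr) <= M l * count (is_msg l) tr.
Proof.
move=> Hex Hf ld; rewrite count_sumidx big_distrr /=.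
rewrite /words big_nat_cond [X in _ <= X]big_nat_cond.
apply: leq_sum => u /andP [/andP [_ hu] _].
have H := msg_le Hex Hf ld hu.
case E: (is_msg l (ev tr u)); first by rewrite muln1.
move: H E; case: (ev tr u) => //= l' w; case: (l' == l) => //.
Qed.

Lemma off_lt n m c (hc : c + m <= n) (p : 'I_m) : c + p < n.
Proof. by apply: leq_trans hc; rewrite ltn_add2l. Qed.

Definition off n m c (hc : c + m <= n) (p : 'I_m) : 'I_n := Ordinal (off_lt hc p).

Lemma m3 n : let m := n %/ 3 in
  [/\ 2 * m + m <= n, m + m <= n & 0 + m <= n].
Proof.
move=> m; rewrite /m; have := leq_trunc_div n 3; set q := n %/ 3; move=> H; split; lia.
Qed.

Lemma Tset_total n d M (tr : seq (event n)) : classical_cholesky d M tr ->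
  (n %/ 3) ^ 3 <= #|Tset tr 0 (size tr)|.
Proof.
move=> [_ Hex Cm _ _].
set m := n %/ 3; have [h1 h2 h3] := m3 n; rewrite -/m in h1 h2 h3.
pose f (x : 'I_m * ('I_m * 'I_m)) := (off h1 x.1, (off h2 x.2.1, off h3 x.2.2)).
have fi : injective f.
  move=> [p [q r]] [p' [q' r']] [E1 E2 E3].
  by rewrite (val_inj (addnI E1)) (val_inj (addnI E2)) (val_inj (addnI E3)).
have -> : m ^ 3 = #|f @: [set: 'I_m * ('I_m * 'I_m)]|.
  by rewrite card_imset // cardsT !card_prod card_ord; lia.
apply: subset_leq_card; apply/subsetP => x /imsetP [[p [q r]] _ ->].
have kj : (off h3 r < off h2 q)%N by rewrite /= add0n; move: (ltn_ord r); lia.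
have ji : (off h2 q <= off h1 p)%N by rewrite /=; move: (ltn_ord q); lia.
have : 0 < count (is_mul (off h1 p) (off h2 q) (off h3 r)) tr by rewrite Cm kj ji.
case/count_ex => u hu Hm; rewrite inE; apply/existsP; exists (Ordinal hu).
by rewrite /= hu.
Qed.

Lemma inputs n d M l (tr : seq (event n)) : l.+1 < d -> classical_cholesky d M tr ->
  (n %/ 3) ^ 2 <= words l tr 0 (size tr).
Proof.
move=> ld [_ Hex _ _ Cf].
set m := n %/ 3; have [_ h2 h3] := m3 n; rewrite -/m in h2 h3.
pose f (x : 'I_m * 'I_m) := (off h2 x.1, off h3 x.2).
have fi : injective f.
  by move=> [p q] [p' q'] [E1 E2]; rewrite (val_inj (addnI E1)) (val_inj (addnI E2)).
apply: leq_trans (card_InOut l tr 0 (size tr)); apply: leq_trans (leq_addr _ _).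
apply: leq_trans (leq_imset_card (@pairv n) _).
have -> : m ^ 2 = #|f @: [set: 'I_m * 'I_m]|.
  by rewrite card_imset // cardsT !card_prod card_ord; lia.
apply: subset_leq_card; apply/subsetP => x /imsetP [[p q] _ ->].
have ji : (off h3 q <= off h2 p)%N by rewrite /= add0n; move: (ltn_ord q); lia.
have : 0 < count (is_fin (off h2 p) (off h3 q)) tr by rewrite Cf ji.
case/count_ex => t2 Ht2 Hf.
have Hs2 := st_step Hex Ht2; rewrite (is_finE Hf) in Hs2.
have /andP [_ Hsum] := step_fin Hs2.
have := G_of_fast l Hex (leq0n t2) (ltnW Ht2) (leqnn _) Hsum.
rewrite /= /summands in_setU1 eqxx => /(_ isT) /imsetP [v].
rewrite inE => /orP [/inFast [t ht Hvt]|Hv] E.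
  move: Hvt; rewrite /st stf0 /init; case: eqP => [Et|]; last by rewrite inE.
  by move: ld ht Et; lia.
by rewrite /f /= E; apply: imset_f.
Qed.

Lemma sqrt_facts a : 0 < a ->
  [/\ 0 < Nat.sqrt a, Nat.sqrt a * Nat.sqrt a <= a & a < (Nat.sqrt a).+1 * (Nat.sqrt a).+1].
Proof.
move=> a0; have [h1 h2] := Nat.sqrt_spec a (Nat.le_0_l a).
have h3 : 0 < Nat.sqrt a.
  by move: h2; case: (Nat.sqrt a) => // H; move: a0 H; lia.
split => //; lia.
Qed.

Lemma level_nat n d M l (tr : seq (event n)) :
  0 < d -> l.+1 < d -> classical_cholesky d M tr -> 0 < M l ->
  (forall l, l.+1 < d -> M l <= M l.+1) ->
  (n %/ 3) ^ 3 * Nat.sqrt (M l) <=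
  (words l tr 0 (size tr) + d * M l) * (20 * (d * M l)).
Proof.
move=> d0 ld CC M0 HM.
set h := Nat.sqrt (M l).
have [h0 hM _] := sqrt_facts M0; rewrite -/h in h0 hM.
have R := rec_bound h d0 ld CC M0 HM (leq0n (size tr)).
have T := Tset_total CC.
set K := d * M l in R *.
set W := words l tr 0 (size tr) in R *.
have K0 : 0 < K by rewrite /K muln_gt0 d0 M0.
have MK : M l <= K by rewrite /K leq_pmull.
rewrite -(leq_pmul2r K0).
apply: leq_trans (_ : #|Tset tr 0 (size tr)| * h * K <= _).
  by rewrite !leq_mul2r T !orbT.
apply: leq_trans R _.
rewrite -[X in _ <= X]mulnA leq_mul2l; apply/orP; right.
have hK : h * h <= K by exact: leq_trans hM MK.
have : 4 * K * h * h <= 4 * K * K by rewrite -mulnA leq_mul2l hK orbT.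
set A := 4 * K * h * h; move=> HA; set KK := K * K.
have -> : 20 * K * K = 20 * KK by rewrite /KK mulnA.
have -> : 4 * K * (4 * K) = 16 * KK by rewrite /KK; lia.
move: HA; rewrite -/KK.
have -> : 4 * K * K = 4 * KK by rewrite /KK mulnA.
lia.
Qed.

Unset Implicit Arguments.
Local Open Scope R_scope.

Lemma real_core (d n m h s W C : R) :
  1 <= d -> 3 <= n -> n <= 9 * m -> 0 < s -> s < h + 1 -> 1 <= h -> 0 <= W ->
  m * m <= W -> m ^ 3 * h <= (W + d * (s * s)) * (20 * (d * (s * s))) ->
  W <= (s * s) * C -> 1 <= C ->
  / (81 * 58320 * d * d) * (n ^ 3 - s ^ 3) <= W * s /\
  / (81 * 58320 * d * d) / 2 * n ^ 3 <= C * s ^ 3.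
Proof.
intros d1 n3 nm s0 sh h1 W0 mW Hm WC C1.
set (cb := / (81 * 58320 * d * d)).
set (de := / (58320 * d * d)).
assert (hs : s / 2 <= h) by lra.
assert (m0 : 0 <= m) by lra.
assert (dd : 1 <= d * d) by nra.
assert (de0 : 0 < de) by (unfold de; apply Rinv_0_lt_compat; nra).
assert (de1 : de <= 1).
{ unfold de; rewrite <- Rinv_1; apply Rinv_le_contravar; lra. }
assert (cbde : cb = de / 81).
{ unfold cb, de; field; lra. }
assert (cb0 : 0 < cb) by (rewrite cbde; lra).
assert (cb1 : cb <= 1) by (rewrite cbde; lra).
assert (S1 : n ^ 3 * s <= 1458 * 20 * d * (s * s) * (W + d * (s * s))).
{ assert (A : (n / 9) ^ 3 <= m ^ 3).
  { apply pow_incr; split; lra. }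
  assert (B : (n / 9) ^ 3 * (s / 2) <= m ^ 3 * h).
  { apply Rmult_le_compat; try lra.
    - apply pow_le; lra. }
  assert (E : (n / 9) ^ 3 * (s / 2) = n ^ 3 * s / 1458) by field.
  rewrite E in B. lra. }
assert (S2 : n ^ 3 <= 29160 * d * s * (W + d * (s * s))).
{ apply Rmult_le_reg_r with s; auto.
  replace (29160 * d * s * (W + d * (s * s)) * s) with (1458 * 20 * d * (s * s) * (W + d * (s * s))) by ring.
  exact S1. }
assert (n0 : 0 < n ^ 3) by (apply pow_lt; lra).
assert (KEY : cb * n ^ 3 <= W * s).
{ destruct (Rle_or_lt s (de * n)) as [Hc|Hc].
  - assert (s3 : s ^ 3 <= de * n ^ 3).
    { assert (T : s ^ 3 <= (de * n) ^ 3) by (apply pow_incr; split; lra).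
      assert (T2 : (de * n) ^ 3 = de ^ 3 * n ^ 3) by ring.
      assert (T3 : de ^ 3 <= de).
      { replace (de ^ 3) with (de * (de * de)) by ring.
        assert (de * de <= 1) by nra. nra. }
      nra. }
    assert (E : 29160 * d * s * (W + d * (s * s)) = 29160 * d * s * W + 29160 * (d * d) * s ^ 3) by ring.
    assert (E2 : 29160 * (d * d) * de = / 2).
    { unfold de; field; lra. }
    assert (F : 29160 * (d * d) * s ^ 3 <= n ^ 3 / 2).
    { assert (29160 * (d * d) * s ^ 3 <= 29160 * (d * d) * (de * n ^ 3)).
      { apply Rmult_le_compat_l; nra. }
      replace (29160 * (d * d) * (de * n ^ 3)) with ((29160 * (d * d) * de) * n ^ 3) in H by ring.
      rewrite E2 in H. lra. }
    assert (G : n ^ 3 <= 58320 * d * (W * s)) by lra.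
    assert (E3 : cb * (58320 * d) = / (81 * d)).
    { unfold cb; field; lra. }
    assert (H81 : / (81 * d) <= 1).
    { rewrite <- Rinv_1; apply Rinv_le_contravar; lra. }
    assert (Ws0 : 0 <= W * s) by nra.
    assert (cb * n ^ 3 <= cb * (58320 * d * (W * s))).
    { apply Rmult_le_compat_l; lra. }
    replace (cb * (58320 * d * (W * s))) with (cb * (58320 * d) * (W * s)) in H by ring.
    rewrite E3 in H. nra.
  - assert (n2 : n * n / 81 <= W) by nra.
    assert (A : n * n / 81 * (de * n) <= W * s).
    { apply Rmult_le_compat; try lra.
      - assert (0 <= n * n) by nra. lra.
      - nra. }
    replace (n * n / 81 * (de * n)) with (cb * n ^ 3) in A; [lra|].
    rewrite cbde; field. }
split.
- assert (0 <= cb * s ^ 3) by (assert (0 < s ^ 3) by (apply pow_lt; lra); nra). nra.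
- assert (s30 : 0 < s ^ 3) by (apply pow_lt; lra).
  assert (L1 : cb * n ^ 3 - cb * s ^ 3 <= C * s ^ 3).
  { replace (C * s ^ 3) with ((s * s) * C * s) by ring.
    assert (W * s <= (s * s) * C * s) by (apply Rmult_le_compat_r; lra).
    assert (0 <= cb * s ^ 3) by nra. lra. }
  assert (L2 : s ^ 3 <= C * s ^ 3) by nra.
  destruct (Rle_or_lt (cb * n ^ 3) (2 * s ^ 3)) as [Hc|Hc].
  + assert (cb / 2 * n ^ 3 = (cb * n ^ 3) / 2) by field. lra.
  + assert (cb * s ^ 3 <= s ^ 3) by nra.
    assert (cb * (cb * n ^ 3) <= cb * n ^ 3) by nra.
    assert (cb / 2 * n ^ 3 = (cb * n ^ 3) / 2) by field.
    nra.
Qed.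

Set Implicit Arguments.

Lemma INR_muln a b : INR (muln a b) = INR a * INR b.
Proof. exact (mult_INR a b). Qed.
Lemma INR_addn a b : INR (addn a b) = INR a + INR b.
Proof. exact (plus_INR a b). Qed.
Lemma INR_expn a k : INR (expn a k) = INR a ^ k.
Proof. elim: k => [|k IH]; first by rewrite expn0. by rewrite expnS INR_muln IH. Qed.
Lemma INR_leq a b : (a <= b)%N -> INR a <= INR b.
Proof. by move/leP; apply: le_INR. Qed.
Lemma INR_ltn a b : (a < b)%N -> INR a < INR b.
Proof. by move/ltP; apply: lt_INR. Qed.

Lemma level_real n d M (alpha beta : nat -> R) (tr : seq (event n)) l :
  (0 < d)%N -> (l.+1 < d)%N -> classical_cholesky d M tr -> (3 <= n)%N ->
  (0 < M l)%N -> (forall l, (l.+1 < d)%N -> (M l <= M l.+1)%N) ->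
  0 <= alpha l -> 0 <= beta l ->
  / (81 * 58320 * INR d * INR d) / 2 *
    (beta l * (INR n ^ 3 / sqrt (INR (M l)) - INR (M l))) <=
    beta l * INR (sumn (map (msg_words l) tr)) /\
  / (81 * 58320 * INR d * INR d) / 2 *
    (alpha l * (INR n ^ 3 / (INR (M l) * sqrt (INR (M l))))) <=
    alpha l * INR (count (is_msg l) tr).
Proof.
move=> d0 ld CC n3 M0 HM a0 b0.
have CC' := CC; case: CC' => [Hf0 Hex _ _ _].
rewrite sumn_words.
set Wn := words l tr 0 (size tr).
set Cn := count (is_msg l) tr.
set m := (n %/ 3)%N.
set h := Nat.sqrt (M l).
have N1 := level_nat d0 ld CC M0 HM; rewrite -/Wn -/m -/h in N1.
have N2 := inputs ld CC; rewrite -/Wn -/m in N2.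
have N3 := words_count Hex Hf0 (ltnW ld); rewrite -/Wn -/Cn in N3.
have N4 : (n <= 9 * m)%N by rewrite /m; move: n3; lia.
have N5 : (1 <= m)%N by rewrite /m; move: n3; lia.
have [h0 hM1 hM2] := sqrt_facts M0; rewrite -/h in h0 hM1 hM2.
have C1 : (1 <= Cn)%N.
  have : (1 <= Wn)%N by apply: leq_trans N2; rewrite expn_gt0 N5.
  move: N3; case: (Cn) => //; rewrite muln0; lia.
set s := sqrt (INR (M l)).
have Mpos : 0 < INR (M l) by apply: (INR_ltn M0).
have s0 : 0 < s by apply: sqrt_lt_R0.
have ss : s * s = INR (M l) by apply: sqrt_sqrt; lra.
have hr1 : 1 <= INR h by apply: (INR_leq h0).
have hr2 : s < INR h + 1.
  have := INR_ltn hM2; rewrite INR_muln S_INR => H.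
  nra.
have [R1 R2] := real_core (INR d) (INR n) (INR m) (INR h) s (INR Wn) (INR Cn)
  (INR_leq d0) (ltac:(have := INR_leq n3; simpl; lra))
  (ltac:(have := INR_leq N4; rewrite INR_muln; simpl; lra)) s0 hr2 hr1 (pos_INR _)
  (ltac:(have := INR_leq N2; rewrite (INR_expn m 2); simpl; lra))
  (ltac:(have := INR_leq N1; rewrite (INR_muln (m ^ 3) h) (INR_expn m 3) !INR_muln INR_addn !INR_muln -ss; simpl; lra))
  (ltac:(have := INR_leq N3; rewrite INR_muln -ss; lra))
  (INR_leq C1).
set cb := / (81 * 58320 * INR d * INR d) in R1 R2 *.
have cb0 : 0 < cb by rewrite /cb; apply: Rinv_0_lt_compat; have := INR_leq d0; simpl; nra.
rewrite -ss; split.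
- rewrite (Rmult_comm (beta l)) -Rmult_assoc Rmult_comm.
  apply: Rmult_le_compat_l => //.
  have W0 := pos_INR Wn.
  have E : INR n ^ 3 / s - s * s = (INR n ^ 3 - s ^ 3) / s by field; lra.
  rewrite E.
  have : cb * ((INR n ^ 3 - s ^ 3) / s) <= INR Wn.
    apply: (Rmult_le_reg_r s) => //.
    have -> : cb * ((INR n ^ 3 - s ^ 3) / s) * s = cb * (INR n ^ 3 - s ^ 3) by field; lra.
    lra.
  move=> H.
  case: (Rle_or_lt 0 ((INR n ^ 3 - s ^ 3) / s)) => Hc.
    have : cb / 2 * ((INR n ^ 3 - s ^ 3) / s) <= cb * ((INR n ^ 3 - s ^ 3) / s) by nra.
    lra.
  nra.
- rewrite (Rmult_comm (alpha l)) -Rmult_assoc Rmult_comm.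
  apply: Rmult_le_compat_l => //.
  have s3 : 0 < s * s * s by nra.
  apply: (Rmult_le_reg_r (s * s * s)) => //.
  have -> : cb / 2 * (INR n ^ 3 / (s * s * s)) * (s * s * s) = cb / 2 * INR n ^ 3 by field; lra.
  have -> : INR Cn * (s * s * s) = INR Cn * s ^ 3 by ring.
  exact: R2.
Qed.

Lemma sumR_le_gen (f g : nat -> R) c k : forall a,
  (forall l, (a <= l)%N -> (l < a + k)%N -> c * g l <= f l) ->
  c * foldr (fun l acc => g l + acc) R0 (iota a k) <= foldr (fun l acc => f l + acc) R0 (iota a k).
Proof.
elim: k => [|k IH] a H /=; first lra.
rewrite Rmult_plus_distr_l; apply: Rplus_le_compat.
  apply: H => //; rewrite addnS ltnS leq_addr //.
apply: IH => l h1 h2; apply: H; [exact: ltnW | by rewrite addnS -addSn].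
Qed.

Lemma sumR_le (f g : nat -> R) c k :
  (forall l, (l < k)%N -> c * g l <= f l) -> c * sumR k g <= sumR k f.
Proof. move=> H; apply: sumR_le_gen => l _; exact: H. Qed.

Theorem corollary3p4 :
  forall d : nat, (0 < d)%N ->
  exists c : R, 0 < c /\
  exists n0 : nat,
  forall (n : nat) (M : nat -> nat) (alpha beta : nat -> R) (tr : seq (event n)),
    (n0 <= n)%N ->
    (forall l : nat, (l < d)%N -> (0 < M l)%N) ->
    (forall l : nat, (l.+1 < d)%N -> (M l <= M l.+1)%N) ->
    (forall l : nat, (l < d)%N -> 0 <= alpha l /\ 0 <= beta l) ->
    (forall l : nat, (l.+1 < d)%N -> alpha l <= alpha l.+1 /\ beta l <= beta l.+1) ->
    classical_cholesky d M tr ->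
    bandwidth_cost d beta tr >=
      c * sumR d.-1 (fun l => beta l * (INR n ^ 3 / sqrt (INR (M l)) - INR (M l))) /\
    latency_cost d alpha tr >=
      c * sumR d.-1 (fun l => alpha l * (INR n ^ 3 / (INR (M l) * sqrt (INR (M l))))).
Proof.
move=> d d0.
exists (/ (81 * 58320 * INR d * INR d) / 2); split.
  have := INR_leq d0; simpl => H.
  have : 0 < / (81 * 58320 * INR d * INR d) by apply: Rinv_0_lt_compat; nra.
  lra.
exists 3%N => n M alpha beta tr hn HM0 HMm Hab _ CC.
have hl : forall l, (l < d.-1)%N -> (l.+1 < d)%N by move=> l; lia.
split; apply: Rle_ge; apply: sumR_le => l /hl ld.
- have [a0 b0] := Hab l (ltnW ld).
  by have [] := level_real d0 ld CC hn (HM0 l (ltnW ld)) HMm a0 b0.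
- have [a0 b0] := Hab l (ltnW ld).
  by have [] := level_real d0 ld CC hn (HM0 l (ltnW ld)) HMm a0 b0.
Qed.
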